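(* Let $G$ be a finite group, $\hat G$ its set of irreducible unitary representations (up to equivalence), and let $\rho_A:G\to U(\mathcal{H}_A)$, $\rho_B:G\to U(\mathcal{H}_B)$ be unitary representations on finite-dimensional complex Hilbert spaces. Let $\rho(g):=\rho_A(g)\otimes\rho_B(g)$ on $\mathcal{H}_A\otimes\mathcal{H}_B$. For $\lambda\in\hat G$ let $\mathcal{H}_A^\lambda\cong V_\lambda\otimes\mathbb{C}^{m_\lambda}$ and $\mathcal{H}_B^\lambda\cong V_\lambda\otimes\mathbb{C}^{n_\lambda}$ be the $\lambda$-isotypic components, so $\mathcal{H}_A=\bigoplus_\lambda\mathcal{H}_A^\lambda$, $\mathcal{H}_B=\bigoplus_\lambda\mathcal{H}_B^\lambda$, and define $\mathcal{K}_G:=\bigoplus_{\lambda\in\hat G}\mathcal{H}_A^\lambda\otimes\mathcal{H}_B^\lambda$. Let $T_A\in\operatorname{End}_G(\mathcal{H}_A)$ and $T_B\in\operatorname{End}_G(\mathcal{H}_B)$ be self-adjoint and $K:=T_A\otimes I-I\otimes T_B$. Then: (i) $K$ commutes with $\rho(g)$ for all $g\in G$; (ii) if there are scalars $a_\lambda$ ($\lambda\in\hat G$) such that $T_A$ acts as $a_\lambda I$ on $\mathcal{H}_A^\lambda$ and $T_B$ acts as $a_\lambda I$ on $\mathcal{H}_B^\lambda$ for all $\lambda$, then $\mathcal{K}_G\subseteq\ker(K)$; (iii) if moreover $T_A=\rho_A(z)$ and $T_B=\rho_B(z)$ for a central element $z\in Z(\mathbb{C}[G])$ (extending $\rho_A,\rho_B$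 linearly), acting by the scalar $\alpha_\lambda$ on $V_\lambda$, and the map $\lambda\mapsto\alpha_\lambda$ is injective on $\hat G$, then $\ker(K)=\mathcal{K}_G$.
   Context: $\operatorname{End}_G(\mathcal{H}_A)$ denotes the operators on $\mathcal{H}_A$ commuting with $\rho_A(g)$ for all $g\in G$ (similarly for $B$). $Z(\mathbb{C}[G])$ is the center of the group algebra. $\mathcal{K}_G$ is called the diagonal isotypic subspace, and $\ker(K)$ the synchronization subspace. *)

(* Defs.v *)
From HB Require Import structures.
From mathcomp Require Import all_boot all_order all_algebra all_fingroup.
From mathcomp Require Import mxrepresentation character.
Set Implicit Arguments. Unset Strict Implicit. Unset Printing Implicit Defensive.
Import Order.TTheory GRing.Theory Num.Theory.
Local Open Scope ring_scope.

(* Conventions: a finite-dimensional complex Hilbert space is C^m with the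
   standard inner product, vectors are row vectors 'rV[C]_m and operators act
   on the right (v *m T), as in MathComp's mxrepresentation library.
   H_A (x) H_B is C^(m*n) with the Kronecker product [tprod] of character.v. *)

Section Defs.
Variable C : numClosedFieldType.

Definition adjmx m n (A : 'M[C]_(m, n)) : 'M[C]_(n, m) := map_mx Num.conj A^T.

Definition self_adjoint n (T : 'M[C]_n) := adjmx T = T.

Variables (gT : finGroupType) (G : {group gT}).

Definition unitary_repr n (r : mx_representation C G n) :=
  forall g, g \in G -> r g *m adjmx (r g) = 1%:M.

Definition intertwiner n (r : mx_representation C G n) (T : 'M[C]_n) :=
  forall g, g \in G -> r g *m T = T *m r g.

Definition Ghom d n (lam : mx_representation C G d) (r : mx_representation C G n)
  (f : 'M[C]_(d, n)) := forall g, g \in G -> lam g *m f = f *m r g.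

(* lambda-isotypic component of H (for an irreducible lam): the span of the
   images of all G-equivariant maps V_lam -> H, i.e. the sum of all
   subrepresentations of H isomorphic to V_lam.  Span = smallest subspace. *)
Definition in_isotypic d n (lam : mx_representation C G d)
  (r : mx_representation C G n) (v : 'rV[C]_n) :=
  forall S : 'M[C]_n,
    (forall (u : 'rV[C]_d) (f : 'M[C]_(d, n)), Ghom lam r f -> (u *m f <= S)%MS) ->
    (v <= S)%MS.

(* the diagonal isotypic subspace K_G = sum_lam H_A^lam (x) H_B^lam
   (lam ranging over irreducible representations; summing over all
   irreducibles rather than one per class gives the same subspace) *)
Definition in_KG m n (rA : mx_representation C G m) (rB : mx_representation C G n)
  (v : 'rV[C]_(m * n)) :=
  forall S : 'M[C]_(m * n),
    (forall d (lam : mx_representation C G d) (a : 'rV[C]_m) (b : 'rV[C]_n),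
        mx_irreducible lam -> in_isotypic lam rA a -> in_isotypic lam rB b ->
        (tprod a b <= S)%MS) ->
    (v <= S)%MS.

(* the group algebra C[G]: functions G -> C, with convolution product *)
Definition galg_mul (x y : gT -> C) : gT -> C :=
  fun g => \sum_(h in G) x h * y (h^-1 * g)%g.

Definition galg_central (z : gT -> C) :=
  forall x : gT -> C, forall g, g \in G -> galg_mul z x g = galg_mul x z g.

Definition repr_galg n (r : mx_representation C G n) (z : gT -> C) : 'M[C]_n :=
  \sum_(g in G) z g *: r g.

End Defs.

(* Main.v *)
Require Import Defs.
From HB Require Import structures.
From mathcomp Require Import all_boot all_order all_algebra all_fingroup all_solvable.
From mathcomp Require Import mxrepresentation character spectral sesquilinear.
Set Implicit Arguments. Unset Strict Implicit. Unset Printing Implicit Defensive.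
Import Order.TTheory GRing.Theory Num.Theory.
Local Open Scope ring_scope.


Section T.
Variable F : fieldType.

Lemma tprodPl m1 n1 (a : F) (A A' : 'M[F]_(m1,n1)) m2 n2 (B : 'M[F]_(m2,n2)) :
  tprod (a *: A + A') B = a *: tprod A B + tprod A' B.
Proof.
elim: m1 A A' => [|m1 IH] A A' /=; first by rewrite scaler0 addr0.
rewrite !linearP /= IH -!trowbE linearP /= !trowbE.
by rewrite scale_col_mx add_col_mx.
Qed.

Lemma tprodPr m1 n1 (A : 'M[F]_(m1,n1)) m2 n2 (a : F) (B B' : 'M[F]_(m2,n2)) :
  tprod A (a *: B + B') = a *: tprod A B + tprod A B'.
Proof.
elim: m1 A => [|m1 IH] A /=; first by rewrite scaler0 addr0.
by rewrite IH linearP /= scale_col_mx add_col_mx.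
Qed.

Lemma tprod0l m1 n1 m2 n2 (B : 'M[F]_(m2,n2)) : tprod (0 : 'M[F]_(m1,n1)) B = 0.
Proof.
have := tprodPl 1 (0 : 'M_(m1,n1)) 0 B; rewrite !scale1r addr0 => h.
by apply: (@addrI _ (tprod (0 : 'M_(m1,n1)) B)); rewrite addr0 -h.
Qed.

Lemma tprod0r m1 n1 (A : 'M[F]_(m1,n1)) m2 n2 : tprod A (0 : 'M[F]_(m2,n2)) = 0.
Proof.
have := tprodPr A 1 (0 : 'M_(m2,n2)) 0; rewrite !scale1r addr0 => h.
by apply: (@addrI _ (tprod A (0 : 'M_(m2,n2)))); rewrite addr0 -h.
Qed.

Lemma tprodDl m1 n1 (A A' : 'M[F]_(m1,n1)) m2 n2 (B : 'M[F]_(m2,n2)) :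
  tprod (A + A') B = tprod A B + tprod A' B.
Proof. by have := tprodPl 1 A A' B; rewrite !scale1r. Qed.
Lemma tprodDr m1 n1 (A : 'M[F]_(m1,n1)) m2 n2 (B B' : 'M[F]_(m2,n2)) :
  tprod A (B + B') = tprod A B + tprod A B'.
Proof. by have := tprodPr A 1 B B'; rewrite !scale1r. Qed.
Lemma tprodZl m1 n1 (a : F) (A : 'M[F]_(m1,n1)) m2 n2 (B : 'M[F]_(m2,n2)) :
  tprod (a *: A) B = a *: tprod A B.
Proof. by have := tprodPl a A 0 B; rewrite !addr0 tprod0l addr0. Qed.
Lemma tprodZr m1 n1 (A : 'M[F]_(m1,n1)) m2 n2 (a : F) (B : 'M[F]_(m2,n2)) :
  tprod A (a *: B) = a *: tprod A B.
Proof. by have := tprodPr A a B 0; rewrite !addr0 tprod0r addr0. Qed.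
Lemma tprodNl m1 n1 (A : 'M[F]_(m1,n1)) m2 n2 (B : 'M[F]_(m2,n2)) :
  tprod (- A) B = - tprod A B.
Proof. by rewrite -scaleN1r tprodZl scaleN1r. Qed.
Lemma tprodNr m1 n1 (A : 'M[F]_(m1,n1)) m2 n2 (B : 'M[F]_(m2,n2)) :
  tprod A (- B) = - tprod A B.
Proof. by rewrite -scaleN1r tprodZr scaleN1r. Qed.
Lemma tprodBl m1 n1 (A A' : 'M[F]_(m1,n1)) m2 n2 (B : 'M[F]_(m2,n2)) :
  tprod (A - A') B = tprod A B - tprod A' B.
Proof. by rewrite tprodDl tprodNl. Qed.
Lemma tprodBr m1 n1 (A : 'M[F]_(m1,n1)) m2 n2 (B B' : 'M[F]_(m2,n2)) :
  tprod A (B - B') = tprod A B - tprod A B'.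
Proof. by rewrite tprodDr tprodNr. Qed.

Lemma tprod_suml (I : finType) m1 n1 (A : I -> 'M[F]_(m1,n1)) m2 n2 (B : 'M[F]_(m2,n2)) :
  tprod (\sum_i A i) B = \sum_i tprod (A i) B.
Proof.
elim/big_rec2: _ => [|i x y _ IHxy]; first by rewrite tprod0l.
by rewrite tprodDl IHxy.
Qed.
Lemma tprod_sumr (I : finType) m1 n1 (A : 'M[F]_(m1,n1)) m2 n2 (B : I -> 'M[F]_(m2,n2)) :
  tprod A (\sum_i B i) = \sum_i tprod A (B i).
Proof.
elim/big_rec2: _ => [|i x y _ IHxy]; first by rewrite tprod0r.
by rewrite tprodDr IHxy.
Qed.

End T.


Section Main.
Variables (C : numClosedFieldType) (gT : finGroupType) (G : {group gT}).

Lemma ghom_galg d n (lam : mx_representation C G d) (r : mx_representation C G n)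
  (f : 'M[C]_(d, n)) z :
  Ghom lam r f -> f *m repr_galg r z = repr_galg lam z *m f.
Proof.
move=> Hf; rewrite /repr_galg mulmx_sumr mulmx_suml; apply: eq_bigr => g Gg.
by rewrite -scalemxAr -scalemxAl Hf.
Qed.

Lemma isotypic_eig d n (lam : mx_representation C G d) (r : mx_representation C G n)
  z c (u : 'rV[C]_n) :
  repr_galg lam z = c *: 1%:M -> in_isotypic lam r u ->
  u *m repr_galg r z = c *: u.
Proof.
move=> Hl Hu; apply/eqP; rewrite -subr_eq0 -mul_mx_scalar -mulmxBr.
apply/eqP/sub_kermxP; apply: Hu => u' f Hf; apply/sub_kermxP.
rewrite -mulmxA mulmxBr (ghom_galg _ Hf) Hl scalemx1 mul_scalar_mx mul_mx_scalar.
by rewrite subrr mulmx0.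
Qed.

Lemma charG : pgroup [pchar C]^' G.
Proof.
rewrite pgroupE; apply: sub_in_pnat (pnat_pi (cardG_gt0 G)) => p _ _.
by rewrite inE /= (pchar_num C p).
Qed.

Variables (n : nat) (r : mx_representation C G n) (z : gT -> C).
Variable alpha : forall d, mx_representation C G d -> C.
Hypothesis Halpha : forall d (lam : mx_representation C G d), mx_irreducible lam ->
           repr_galg lam z = alpha lam *: 1%:M.
Hypothesis Hinj : forall d1 (lam1 : mx_representation C G d1)
                d2 (lam2 : mx_representation C G d2),
           mx_irreducible lam1 -> mx_irreducible lam2 ->
           alpha lam1 = alpha lam2 -> mx_rsim lam1 lam2.
Hypothesis HT : intertwiner r (repr_galg r z).

Let T := repr_galg r z.

Lemma eig_module c : mxmodule r (kermx (T - c%:M)).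
Proof.
apply/mxmoduleP => g Gg; apply/sub_kermxP.
rewrite -mulmxA mulmxBr HT // scalar_mxC -mulmxBl mulmxA mulmx_ker mul0mx //.
Qed.

Lemma val_submod_galg (W : 'M[C]_n) (Wmod : mxmodule r W) :
  val_submod (repr_galg (submod_repr Wmod) z) = val_submod 1%:M *m T.
Proof.
rewrite /T /repr_galg linear_sum mulmx_sumr; apply: eq_bigr => g Gg.
by rewrite linearZ /= -scalemxAr -val_submodJ // mul1mx.
Qed.

Lemma simple_alpha c (W : 'M[C]_n) (Wmod : mxmodule r W) :
  mxsimple r W -> (W <= kermx (T - c%:M))%MS -> alpha (submod_repr Wmod) = c.
Proof.
move=> simW sWE.
have irr : mx_irreducible (submod_repr Wmod) by apply/submod_mx_irr.
have := val_submod_galg Wmod; rewrite Halpha // linearZ /=.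
move: (submx_trans (@val_submodP _ _ W _ 1%:M) sWE) => /sub_kermxP.
rewrite mulmxBr mul_mx_scalar => /eqP; rewrite subr_eq0 => /eqP -> /eqP.
rewrite -subr_eq0 -scalerBl scalemx_eq0 val_submod_eq0 subr_eq0.
have nz1 : (1%:M : 'M[C]_(\rank W)) != 0.
  case: simW => _ nzW _; rewrite -mxrank_eq0 mxrank1 mxrank_eq0 //.
by rewrite (negPf nz1) orbF => /eqP.
Qed.


Lemma eig_isotypic c d (lam0 : mx_representation C G d) (u : 'rV[C]_n) :
  mx_irreducible lam0 -> alpha lam0 = c -> (u <= kermx (T - c%:M))%MS ->
  in_isotypic lam0 r u.
Proof.
move=> irr0 a0 suE S hS; apply: submx_trans suE _.
have modE := eig_module c.
have redE := mx_reducibleS modE (submx1 _) (mx_Maschke_pchar r charG).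
apply: (mx_reducible_semisimple modE redE) => -[I W SW simW defE _].
rewrite -defE; apply/sumsmx_subP => i _.
have sWE : (W i <= kermx (T - c%:M))%MS by rewrite -defE; exact: (sumsmx_sup i).
have modW := mxsimple_module (simW i).
have ai := simple_alpha modW (simW i) sWE.
have irri : mx_irreducible (submod_repr modW) by apply/submod_mx_irr.
case: (Hinj irr0 irri (etrans a0 (esym ai))) => B dn freeB homB.
pose f := B *m val_submod 1%:M.
have Gf : Ghom lam0 r f.
  move=> g Gg; rewrite /f mulmxA homB // -mulmxA.
  have := val_submodJ modW 1%:M Gg; rewrite mul1mx => vJ.
  have e : submod_repr modW g *m val_submod 1%:M = val_submod 1%:M *m r g.
    by rewrite -vJ (val_submodE (submod_mx modW g)).
  by rewrite -[RHS]mulmxA; congr (_ *m _); exact: e.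
have sfS : (f <= S)%MS.
  by apply/row_subP => k; rewrite rowE; exact: hS.
apply: submx_trans sfS.
have fullB : row_full B by rewrite /row_full (eqP freeB) dn.
by rewrite /f (eqmxMfull _ fullB) val_submod1.
Qed.

Lemma eig_exists c (u : 'rV[C]_n) : u != 0 -> (u <= kermx (T - c%:M))%MS ->
  classically (exists d, exists lam : mx_representation C G d,
     mx_irreducible lam /\ alpha lam = c).
Proof.
move=> nzu suE b hQ.
have nzE : kermx (T - c%:M) != 0.
  by apply: contraNneq nzu => E0; rewrite -submx0 -E0.
apply: (mxsimple_exists (eig_module c) nzE) => -[V simV sVE].
apply: hQ; exists (\rank V), (submod_repr (mxsimple_module simV)); split.
  by apply/submod_mx_irr.
exact: simple_alpha.
Qed.

End Main.



Lemma tprod_decomp (F : fieldType) m n (w : 'rV[F]_(m * n)) :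
  w = \sum_(i < m) \sum_(j < n)
        (w *m tprod (delta_mx i 0 : 'cV[F]_m) (delta_mx j 0 : 'cV[F]_n)) 0 0 *:
          tprod (delta_mx 0 i : 'rV[F]_m) (delta_mx 0 j : 'rV[F]_n).
Proof.
rewrite {1}(_ : w = w *m tprod (1%:M : 'M[F]_m) (1%:M : 'M[F]_n)); last first.
  by rewrite tprod1 mulmx1.
rewrite [X in tprod X _]mx1_sum_delta tprod_suml mulmx_sumr; apply: eq_bigr => i _.
rewrite mx1_sum_delta tprod_sumr mulmx_sumr; apply: eq_bigr => j _.
rewrite -(mul_delta_mx (0 : 'I_1) i i) -(mul_delta_mx (0 : 'I_1) j j) tprodE mulmxA.
by rewrite [X in X *m _]mx11_scalar mul_scalar_mx.
Qed.

Lemma diag_delta (F : fieldType) m (d : 'rV[F]_m) i :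
  diag_mx d *m (delta_mx i 0 : 'cV[F]_m) = d 0 i *: delta_mx i 0.
Proof.
apply/matrixP => k l; rewrite mul_diag_mx !mxE.
by case: (eqVneq k i) => [->|ne]; rewrite ?mulr1 ?mulr0 ?mulr1n ?mulr0n.
Qed.

Lemma spec_rows (C : numClosedFieldType) m (T : 'M[C]_m) (i : 'I_m) :
  T \is normalmx ->
  row i (spectralmx T) *m T = spectral_diag T 0 i *: row i (spectralmx T).
Proof.
move=> /orthomx_spectralP E.
have PU := spectral_unit T.
rewrite -row_mul {2}E !mulmxA mulmxV // mul1mx row_mul row_diag_mx.
by rewrite -scalemxAl -rowE.
Qed.

Lemma ker_decomp (C : numClosedFieldType) m n (TA : 'M[C]_m) (TB : 'M[C]_n)
  (S : 'M[C]_(m * n)) (v : 'rV[C]_(m * n)) :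
  TA \is normalmx -> TB \is normalmx ->
  (forall (a : 'rV[C]_m) (b : 'rV[C]_n) (c : C), a *m TA = c *: a -> b *m TB = c *: b -> (tprod a b <= S)%MS) ->
  v *m (tprod TA (1%:M : 'M[C]_n) - tprod (1%:M : 'M[C]_m) TB) = 0 -> (v <= S)%MS.
Proof.
move=> nA nB key hv.
set P := spectralmx TA; set Q := spectralmx TB.
set dA := spectral_diag TA; set dB := spectral_diag TB.
have EA : TA = invmx P *m diag_mx dA *m P := elimT (@orthomx_spectralP _ _ TA) nA.
have EB : TB = invmx Q *m diag_mx dB *m Q := elimT (@orthomx_spectralP _ _ TB) nB.
have PU : P \in unitmx := spectral_unit TA.
have QU : Q \in unitmx := spectral_unit TB.
have PTA : P *m TA = diag_mx dA *m P by rewrite {1}EA !mulmxA mulmxV // mul1mx.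
have QTB : Q *m TB = diag_mx dB *m Q by rewrite {1}EB !mulmxA mulmxV // mul1mx.
set M := tprod P Q; set Mi := tprod (invmx P) (invmx Q).
have MiM : Mi *m M = 1%:M by rewrite -tprodE !mulVmx // tprod1.
have MMi : M *m Mi = 1%:M by rewrite -tprodE !mulmxV // tprod1.
set D := tprod (diag_mx dA) (1%:M : 'M[C]_n) - tprod (1%:M : 'M[C]_m) (diag_mx dB).
have MK : M *m (tprod TA (1%:M : 'M[C]_n) - tprod (1%:M : 'M[C]_m) TB) = D *m M.
  by rewrite mulmxBr mulmxBl -!tprodE !mulmx1 !mul1mx PTA QTB.
set w := v *m Mi.
have vw : v = w *m M by rewrite /w -mulmxA MiM mulmx1.
have wD : w *m D = 0.
  have h : w *m (D *m M) = 0 by rewrite -MK mulmxA -vw hv.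
  by rewrite -[w *m D]mulmx1 -MMi mulmxA -[w *m D *m M]mulmxA h mul0mx.
set cf := fun (i : 'I_m) (j : 'I_n) =>
  (w *m tprod (delta_mx i 0 : 'cV[C]_m) (delta_mx j 0 : 'cV[C]_n)) 0 0.
have cfz i j : (dA 0 i - dB 0 j) * cf i j = 0.
  have Dij : D *m tprod (delta_mx i 0 : 'cV[C]_m) (delta_mx j 0 : 'cV[C]_n) =
      (dA 0 i - dB 0 j) *: tprod (delta_mx i 0 : 'cV[C]_m) (delta_mx j 0 : 'cV[C]_n).
    by rewrite mulmxBl -!tprodE !mul1mx !diag_delta tprodZl tprodZr scalerBl.
  have := congr1 (fun X => (X *m tprod (delta_mx i 0 : 'cV[C]_m) (delta_mx j 0 : 'cV[C]_n)) 0 0) wD.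
  by rewrite /= mul0mx -mulmxA Dij -scalemxAr mxE [in RHS]mxE.
rewrite vw {1}(tprod_decomp w) mulmx_suml; apply: summx_sub => i _.
rewrite mulmx_suml; apply: summx_sub => j _.
rewrite -scalemxAl /M.
rewrite -[X in X *: _]/(cf i j).
have [->|nz] := eqVneq (cf i j) 0; first by rewrite scale0r sub0mx.
apply: scalemx_sub.
have /eqP := cfz i j; rewrite mulf_eq0 (negPf nz) orbF subr_eq0 => /eqP eij.
have := key (row i P) (row j Q) (dA 0 i) (spec_rows _ nA).
rewrite eij => /(_ (spec_rows _ nB)).
by rewrite !rowE tprodE.
Qed.


Lemma part2 (C : numClosedFieldType) (gT : finGroupType) (G : {group gT})
  (m n : nat) (rA : mx_representation C G m) (rB : mx_representation C G n)
  (TA : 'M[C]_m) (TB : 'M[C]_n) (a : forall d, mx_representation C G d -> C) :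
  (forall d (lam : mx_representation C G d), mx_irreducible lam ->
        (forall u, in_isotypic lam rA u -> u *m TA = a d lam *: u) /\
        (forall w, in_isotypic lam rB w -> w *m TB = a d lam *: w)) ->
  forall v : 'rV[C]_(m * n), in_KG rA rB v ->
   v *m (tprod TA (1%:M : 'M[C]_n) - tprod (1%:M : 'M[C]_m) TB) = 0.
Proof.
move=> Ha v Hv; apply/sub_kermxP; apply: Hv => d lam x y irr hx hy.
apply/sub_kermxP; have [HA HB] := Ha d lam irr.
rewrite mulmxBr -!tprodE !mulmx1 HA // HB //.
by rewrite tprodZl tprodZr subrr.
Qed.

Theorem theorem5 (C : numClosedFieldType) (gT : finGroupType) (G : {group gT})
  (m n : nat) (rA : mx_representation C G m) (rB : mx_representation C G n)
  (HuA : unitary_repr rA) (HuB : unitary_repr rB)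
  (TA : 'M[C]_m) (TB : 'M[C]_n)
  (HTA : intertwiner rA TA) (HTB : intertwiner rB TB)
  (HsA : self_adjoint TA) (HsB : self_adjoint TB) :
  let K := tprod TA (1%:M : 'M[C]_n) - tprod (1%:M : 'M[C]_m) TB in
  (* (i) *)
  (forall g, g \in G -> tprod (rA g) (rB g) *m K = K *m tprod (rA g) (rB g))
  /\
  (* (ii) *)
  ((exists a : forall d, mx_representation C G d -> C,
      forall d (lam : mx_representation C G d), mx_irreducible lam ->
        (forall u, in_isotypic lam rA u -> u *m TA = a d lam *: u) /\
        (forall w, in_isotypic lam rB w -> w *m TB = a d lam *: w)) ->
   forall v : 'rV[C]_(m * n), in_KG rA rB v -> v *m K = 0)
  /\
  (* (iii) *)
  (forall z : gT -> C, galg_central G z ->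
     TA = repr_galg rA z -> TB = repr_galg rB z ->
     (exists alpha : forall d, mx_representation C G d -> C,
        (forall d (lam : mx_representation C G d), mx_irreducible lam ->
           repr_galg lam z = alpha d lam *: 1%:M) /\
        (forall d1 (lam1 : mx_representation C G d1)
                d2 (lam2 : mx_representation C G d2),
           mx_irreducible lam1 -> mx_irreducible lam2 ->
           alpha d1 lam1 = alpha d2 lam2 -> mx_rsim lam1 lam2)) ->
     forall v : 'rV[C]_(m * n), v *m K = 0 <-> in_KG rA rB v).
Proof.
move=> K; split; [|split].
- move=> g Gg; rewrite /K mulmxBr mulmxBl -!tprodE !mulmx1 !mul1mx.
  by rewrite HTA // HTB.
- by move=> [a Ha]; exact: part2 Ha.
move=> z _ eA eB [alpha [Ha Hinj]] v.
have HTA' : intertwiner rA (repr_galg rA z) by rewrite -eA.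
have HTB' : intertwiner rB (repr_galg rB z) by rewrite -eB.
have nA : TA \is normalmx.
  have e : map_mx Num.conj TA^T = TA := HsA.
  by apply/normalmxP; rewrite e.
have nB : TB \is normalmx.
  have e : map_mx Num.conj TB^T = TB := HsB.
  by apply/normalmxP; rewrite e.
split.
- move=> hv S hS; apply: (ker_decomp nA nB _ hv) => a b c ha hb.
  have [->|nza] := eqVneq a 0; first by rewrite tprod0l sub0mx.
  have [->|nzb] := eqVneq b 0; first by rewrite tprod0r sub0mx.
  have aE : (a <= kermx (repr_galg rA z - c%:M))%MS.
    by apply/sub_kermxP; rewrite mulmxBr -eA ha mul_mx_scalar subrr.
  have bE : (b <= kermx (repr_galg rB z - c%:M))%MS.
    by apply/sub_kermxP; rewrite mulmxBr -eB hb mul_mx_scalar subrr.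
  apply: (eig_exists Ha HTA' nza aE) => -[d [lam [irr ac]]].
  apply: (hS d lam a b irr).
    exact: (eig_isotypic Ha Hinj HTA' irr ac aE).
  exact: (eig_isotypic Ha Hinj HTB' irr ac bE).
- apply: part2 => d lam irr; split => u hu.
    by rewrite eA; exact: isotypic_eig (Ha _ _ irr) hu.
  by rewrite eB; exact: isotypic_eig (Ha _ _ irr) hu.
Qed.
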